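(* Let $r\ge2$ and $\Lambda=\Phi^+_{A_{r+1}}\setminus\{\varepsilon_{r+1}-\varepsilon_{r+2}\}$. Then \[K_\Lambda(\varepsilon_1+\varepsilon_2-\varepsilon_{r+1}-\varepsilon_{r+2})=\mathsf{js}(\langle1,1\rangle,\langle1,1\rangle,r).\]
   Context: $\Phi^+_{A_{r+1}}=\{\varepsilon_i-\varepsilon_j:1\le i<j\le r+2\}\subset\mathbb{R}^{r+2}$; for $\Lambda\subseteq\Phi^+_{A_{r+1}}$, $K_\Lambda(\mu)$ is the number of finite multisets of elements of $\Lambda$ summing to $\mu$. A juggling state is a finitely supported integer vector $\langle s_1,s_2,\dots\rangle$ indexed by heights (trailing zeros omitted). A juggling sequence of length $n$ from $\mathbf{a}$ to $\mathbf{b}$ is a sequence $(\mathbf{s}_0,\dots,\mathbf{s}_n)$ with $\mathbf{s}_0=\mathbf{a}$, $\mathbf{s}_n=\mathbf{b}$ such that for each $i$ there are nonnegative integers $c^{(i)}_k$ (finitely many nonzero) with $\sum_k c^{(i)}_k=(\mathbf{s}_{i-1})_1$ and $(\mathbf{s}_i)_k=(\mathbf{s}_{i-1})_{k+1}+c^{(i)}_k$ for all $k\ge1$; $\mathsf{js}(\mathbf{a},\mathbf{b},n)$ is the number of such sequences. *)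

(* Defs.v *)
From mathcomp Require Import all_boot all_order all_algebra.
Set Implicit Arguments. Unset Strict Implicit. Unset Printing Implicit Defensive.
Import Order.TTheory GRing.Theory Num.Theory.

Definition card_of (T : eqType) (P : T -> Prop) (n : nat) : Prop :=
  exists s : seq T, [/\ uniq s, (forall x, P x <-> x \in s) & size s = n].

(* Coordinates of R^(r+2) are indexed 0..r+1 (epsilon_{i+1} <-> index i).
   The positive root eps_i - eps_j (i<j) is indexed by the pair (i,j). *)
Definition posroot (r : nat) (p : 'I_(r.+2) * 'I_(r.+2)) : bool :=
  (p.1 < p.2)%N.

Definition inLambda (r : nat) (p : 'I_(r.+2) * 'I_(r.+2)) : bool :=
  posroot p && ~~ ((nat_of_ord p.1 == r) && (nat_of_ord p.2 == r.+1)).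

Definition root_coord (r : nat) (p : 'I_(r.+2) * 'I_(r.+2)) (k : 'I_(r.+2)) : int :=
  ((k == p.1 : nat)%:Z - (k == p.2 : nat)%:Z)%R.

(* A finite multiset of elements of Lambda = multiplicity function
   supported on Lambda; it sums to mu. *)
Definition Kmultiset (r : nat) (mu : 'I_(r.+2) -> int)
  (m : {ffun 'I_(r.+2) * 'I_(r.+2) -> nat}) : Prop :=
  (forall p, ~~ inLambda p -> m p = 0%N) /\
  (forall k : 'I_(r.+2),
     (\sum_(p : 'I_(r.+2) * 'I_(r.+2)) (m p)%:Z * root_coord p k)%R = mu k).

Definition mu14 (r : nat) (k : 'I_(r.+2)) : int :=
  ((nat_of_ord k == 0%N : nat)%:Z + (nat_of_ord k == 1%N : nat)%:Z
   - (nat_of_ord k == r : nat)%:Z - (nat_of_ord k == r.+1 : nat)%:Z)%R.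

(* Juggling states: finitely supported integer vectors <s_1, s_2, ...>,
   represented as seq int with trailing zeros omitted; height k+1 is
   entry k (nth 0 s k). *)
Definition js_state (s : seq int) : bool := (s == [::]) || (last 0%R s != 0%R).

(* One juggling step: there are c_k in nat, finitely many nonzero
   (represented by a seq nat, c_{k+1} = nth 0 c k), summing to s_1, with
   t_k = s_{k+1} + c_k. *)
Definition js_step (s t : seq int) : Prop :=
  exists c : seq nat,
    Posz (sumn c) = nth 0%R s 0 /\
    forall k : nat, nth 0%R t k = (nth 0%R s k.+1 + (nth 0%N c k)%:Z)%R.

Definition js_seq (a b : seq int) (n : nat) (ss : seq (seq int)) : Prop :=
  [/\ size ss = n.+1, all js_state ss, nth [::] ss 0 = a, nth [::] ss n = b &
      forall i, (i < n)%N -> js_step (nth [::] ss i) (nth [::] ss i.+1)].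

(* Main.v *)
Require Import Defs.
From mathcomp Require Import all_boot all_order all_algebra.
From mathcomp Require Import zify ring lra.
Set Implicit Arguments. Unset Strict Implicit. Unset Printing Implicit Defensive.
Import Order.TTheory GRing.Theory Num.Theory.

Module P1.
Local Open Scope ring_scope.
Local Open Scope ring_scope.

Lemma card_of_transfer (T U : eqType) (P : T -> Prop) (Q : U -> Prop) n
  (f : T -> U) (g : U -> T) :
  card_of P n -> (forall x, P x -> Q (f x)) -> (forall y, Q y -> P (g y)) ->
  (forall x, P x -> g (f x) = x) -> (forall y, Q y -> f (g y) = y) ->
  card_of Q n.
Proof.
move=> [s [us Ps ss]] PQ QP gf fg; exists (map f s); split.
- rewrite map_inj_in_uniq // => x y /Ps Px /Ps Py e.
  by rewrite -(gf x Px) e gf.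
- move=> y; split.
  + move=> Qy; rewrite -(fg y Qy); apply: map_f; exact/Ps/QP.
  + by move/mapP=> [x /Ps Px ->]; apply: PQ.
- by rewrite size_map.
Qed.

Fixpoint trim (s : seq int) : seq int :=
  match s with
  | [::] => [::]
  | x :: s' => let t := trim s' in if (t == [::]) && (x == 0) then [::] else x :: t
  end.

Lemma nth_trim s k : nth 0 (trim s) k = nth 0 s k.
Proof.
elim: s k => [|x s IH] k //=.
case: ifP => [/andP[/eqP t0 /eqP ->]|_]; last by case: k.
case: k => [|k] //=; by rewrite ?nth_nil -IH t0 ?nth_nil.
Qed.

Lemma state_trim s : js_state (trim s).
Proof.
rewrite /js_state; elim: s => [|x s IH] //=.
case: ifP => [//|/negbT]; rewrite negb_and => H /=.
case: (trim s) IH H => [|y t] /= IH H.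
  by [].
by [].
Qed.

Lemma state_eq s t : js_state s -> js_state t ->
  (forall k, nth 0 s k = nth 0 t k) -> s = t.
Proof.
have key: forall s t : seq int, js_state t -> (forall k, nth 0 s k = nth 0 t k) ->
   (size t <= size s)%N.
  move=> s0 t0; rewrite /js_state; case/orP=> [/eqP -> //|ht] e.
  rewrite leqNgt; apply/negP => lt.
  case: t0 ht e lt => [|y t0] //= ht e lt.
  move: (e (size t0)); rewrite nth_default; last by rewrite -ltnS.
  have := nth_last 0 (y :: t0); rewrite /= => hl h.
  by rewrite -hl -h eqxx in ht.
move=> hs ht e; apply/(@eq_from_nth _ 0).
  by apply/eqP; rewrite eqn_leq !key.
by move=> i _; apply: e.
Qed.

End P1.
Import P1.

Module P2.
Local Open Scope ring_scope.
Local Open Scope ring_scope.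

Lemma Posz_sum (I : Type) (s : seq I) (P : pred I) (F : I -> nat) :
  Posz (\sum_(i <- s | P i) F i)%N = \sum_(i <- s | P i) Posz (F i).
Proof. elim/big_rec2: _ => // i a b _ <-; by rewrite PoszD. Qed.

Lemma sum_coord r (m : {ffun 'I_r.+2 * 'I_r.+2 -> nat}) (k : 'I_r.+2) :
  \sum_(p : 'I_r.+2 * 'I_r.+2) (m p)%:Z * root_coord p k =
  (\sum_(j < r.+2) m (k, j))%N%:Z - (\sum_(i < r.+2) m (i, k))%N%:Z.
Proof.
have -> : \sum_(p : 'I_r.+2 * 'I_r.+2) (m p)%:Z * root_coord p k =
   \sum_(i < r.+2) \sum_(j < r.+2) (m (i, j))%:Z * root_coord (i, j) k.
  by rewrite pair_big; apply: eq_bigr => -[i j].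
rewrite /root_coord /=.
under eq_bigr => i _ do under eq_bigr => j _ do rewrite mulrBr.
under eq_bigr => i _ do rewrite sumrB.
rewrite sumrB !Posz_sum; congr (_ - _).
- rewrite (bigD1 k) //= [X in _ + X]big1 ?addr0.
    by apply: eq_bigr => j _; rewrite eqxx mulr1.
  move=> i ik; apply: big1 => j _; by rewrite eq_sym (negbTE ik) mulr0.
- rewrite exchange_big /=; rewrite (bigD1 k) //= [X in _ + X]big1 ?addr0.
    by apply: eq_bigr => j _; rewrite eqxx mulr1.
  move=> i ik; apply: big1 => j _; by rewrite eq_sym (negbTE ik) mulr0.
Qed.

Definition outd r (m : {ffun 'I_r.+2 * 'I_r.+2 -> nat}) (k : 'I_r.+2) : nat :=
  (\sum_(j < r.+2) m (k, j))%N.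
Definition ind r (m : {ffun 'I_r.+2 * 'I_r.+2 -> nat}) (k : 'I_r.+2) : nat :=
  (\sum_(i < r.+2) m (i, k))%N.

Lemma K_cons r (m : {ffun 'I_r.+2 * 'I_r.+2 -> nat}) :
  Kmultiset (@mu14 r) m -> forall k, (outd m k)%:Z - (ind m k)%:Z = mu14 k.
Proof. by move=> [_ h] k; rewrite -h sum_coord. Qed.

Lemma sum_src r (t : nat) :
  (\sum_(k < r.+2 | (k <= t)%N) mu14 k <= 2)%R.
Proof.
set S := \sum_(k < r.+2) (((nat_of_ord k == 0)%N : nat)%:Z + ((nat_of_ord k == 1)%N : nat)%:Z).
have h2 : S = 2.
  rewrite /S 2!big_ord_recl big1 ?addr0 //.
rewrite -h2 /S [X in (_ <= X)%R](bigID (fun k : 'I_r.+2 => (k <= t)%N)) /=.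
rewrite -[X in (X <= _)%R]addr0; apply: lerD.
  apply: ler_sum => k _; rewrite /mu14; lia.
by apply: sumr_ge0 => k _; lia.
Qed.

Lemma K_bound r (m : {ffun 'I_r.+2 * 'I_r.+2 -> nat}) :
  Kmultiset (@mu14 r) m -> forall p, (m p <= 2)%N.
Proof.
move=> hK p; case: (boolP (inLambda p)) => hp; last by rewrite hK.1.
have sup : forall q : 'I_r.+2 * 'I_r.+2, ~~ (q.1 < q.2)%N -> m q = 0%N.
  by move=> q hq; apply: hK.1; rewrite /inLambda /posroot (negbTE hq).
set t := nat_of_ord p.1.
set X := (\sum_(i < r.+2 | (i <= t)%N) \sum_(j < r.+2 | (j <= t)%N) m (i, j))%N.
set C := (\sum_(i < r.+2 | (i <= t)%N) \sum_(j < r.+2 | ~~ (j <= t)%N) m (i, j))%N.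
have hA : (\sum_(k < r.+2 | (k <= t)%N) outd m k)%N = (X + C)%N.
  rewrite /X /C -big_split /=; apply: eq_bigr => k _.
  by rewrite /outd (bigID (fun j : 'I_r.+2 => (j <= t)%N)).
have hB : (\sum_(k < r.+2 | (k <= t)%N) ind m k)%N = X.
  rewrite /X [RHS]exchange_big /=; apply: eq_bigr => k hk.
  rewrite /ind (bigID (fun j : 'I_r.+2 => (j <= t)%N)) /= [X in (_ + X)%N]big1 ?addn0 //.
  move=> i hi; apply: sup => /=; lia.
have hC : (C <= 2)%N.
  have := sum_src r t.
  under eq_bigr => k _ do rewrite -(K_cons hK k).
  rewrite sumrB -!Posz_sum hA hB.
  lia.
apply: leq_trans hC; rewrite /C (bigD1 p.1) ?leqnn //=.
apply: leq_trans (leq_addr _ _).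
have lt : ~~ (nat_of_ord p.2 <= t)%N.
  by move: hp; rewrite /inLambda /posroot -ltnNge; case/andP.
rewrite (bigD1 p.2) //=; rewrite -surjective_pairing; exact: leq_addr.
Qed.

Definition kb r (m : {ffun 'I_r.+2 * 'I_r.+2 -> nat}) : bool :=
  [forall p, ~~ inLambda p ==> (m p == 0%N)] &&
  [forall k, \sum_(p : 'I_r.+2 * 'I_r.+2) (m p)%:Z * root_coord p k == mu14 k].

Lemma kbP r m : reflect (Kmultiset (@mu14 r) m) (kb m).
Proof.
apply: (iffP andP) => [[/forallP h1 /forallP h2]|[h1 h2]]; split.
- by move=> p hp; apply/eqP; exact: (implyP (h1 p) hp).
- by move=> k; apply/eqP.
- by apply/forallP => p; apply/implyP => hp; rewrite h1.
- by apply/forallP => k; rewrite h2.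
Qed.

Lemma K_card r : exists N, card_of (@Kmultiset r (@mu14 r)) N.
Proof.
set conv := fun g : {ffun 'I_r.+2 * 'I_r.+2 -> 'I_3} =>
  [ffun p => nat_of_ord (g p)] : {ffun 'I_r.+2 * 'I_r.+2 -> nat}.
exists (size [seq m <- [seq conv g | g <- enum {: {ffun 'I_r.+2 * 'I_r.+2 -> 'I_3}}] | kb m]).
eexists; split; last reflexivity.
- apply: filter_uniq; rewrite map_inj_uniq ?enum_uniq //.
  move=> g1 g2 e; apply/ffunP => p; apply: val_inj.
  by have := congr1 (fun f : {ffun _ -> nat} => f p) e; rewrite /conv /= !ffunE.
- move=> m; rewrite mem_filter; split.
  + move=> hK; apply/andP; split; first exact/kbP.
    apply/mapP; exists [ffun p => inord (m p) : 'I_3]; first by rewrite mem_enum.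
    apply/ffunP => p; rewrite /conv !ffunE inordK //; rewrite ltnS; exact: K_bound.
  + by case/andP => /kbP.
Qed.

End P2.
Import P2.


Lemma sumn_nth (s : seq nat) : sumn s = \sum_(i < size s) nth 0 s i.
Proof. by rewrite sumnE (big_nth 0) big_mkord. Qed.

Lemma sum_trunc (F : nat -> nat) a b :
  a <= b -> (forall u, a <= u -> F u = 0) -> \sum_(u < b) F u = \sum_(u < a) F u.
Proof.
move=> ab h; elim: b ab => [|b IH]; first by rewrite leqn0 => /eqP ->.
rewrite leq_eqVlt => /orP [/eqP -> //|]; rewrite ltnS => ab.
by rewrite big_ord_recr /= h // addn0 IH.
Qed.

Lemma sum_trunc2 (F : nat -> nat) a b b' :
  a <= b -> a <= b' -> (forall u, a <= u -> F u = 0) ->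
  \sum_(u < b) F u = \sum_(u < b') F u.
Proof. by move=> h1 h2 h; rewrite (sum_trunc h1 h) (sum_trunc h2 h). Qed.

Lemma sum_shift (F : nat -> nat) a b :
  \sum_(j < a + b) F j = \sum_(j < a) F j + \sum_(k < b) F (a + k).
Proof.
elim: b => [|b IH]; first by rewrite addn0 big_ord0 addn0.
by rewrite addnS !big_ord_recr /= IH addnA.
Qed.

Lemma sumn_mkseq (f : nat -> nat) n : sumn (mkseq f n) = \sum_(k < n) f k.
Proof.
rewrite sumn_nth size_mkseq; apply: eq_bigr => i _; by rewrite nth_mkseq.
Qed.

Definition src (v : nat) : nat := (v == 0) + (v == 1).

Definition MM r (m : {ffun 'I_r.+2 * 'I_r.+2 -> nat}) (u v : nat) : nat :=
  if (u < r.+2) && (v < r.+2) then m (inord u, inord v) else 0.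

Lemma MM_ord r m (i j : 'I_r.+2) : MM m i j = m (i, j).
Proof. by rewrite /MM !ltn_ord /= !inord_val. Qed.

Lemma MM_out r m u v : r.+2 <= v -> @MM r m u v = 0.
Proof. by rewrite /MM leqNgt => /negbTE ->; rewrite andbF. Qed.

Lemma outdE r m (k : 'I_r.+2) : outd m k = \sum_(j < r.+2) MM m k j.
Proof. by apply: eq_bigr => j _; rewrite MM_ord. Qed.

Lemma indE r m (k : 'I_r.+2) : ind m k = \sum_(i < r.+2) MM m i k.
Proof. by apply: eq_bigr => j _; rewrite MM_ord. Qed.

Definition suppL r (m : {ffun 'I_r.+2 * 'I_r.+2 -> nat}) :=
  forall p, ~~ inLambda p -> m p = 0.

Lemma MM_le r m u v : suppL m -> v <= u -> @MM r m u v = 0.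
Proof.
move=> hs vu; rewrite /MM; case: ifP => // /andP [hu hv]; apply: hs.
by rewrite /inLambda /posroot /= !inordK //; lia.
Qed.

Lemma MM_rr r m : suppL m -> @MM r m r r.+1 = 0.
Proof.
move=> hs; rewrite /MM ifT; last by apply/andP; split.
by apply: hs; rewrite /inLambda /posroot /= !inordK // !eqxx andbF.
Qed.

Lemma outd_shift r m (k : nat) : suppL m ->
  \sum_(j < r.+2) @MM r m k j = \sum_(kk < r.+2) MM m k (k.+1 + kk).
Proof.
move=> hs; rewrite -(@sum_trunc _ r.+2 (k.+1 + r.+2)); last 2 first.
- by rewrite leq_addl.
- by move=> u hu; rewrite MM_out.
rewrite sum_shift big1 ?add0n // => j _; apply: MM_le => //; by rewrite -ltnS.
Qed.


Definition SS r (m : {ffun 'I_r.+2 * 'I_r.+2 -> nat}) i k : nat :=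
  src (i + k) + \sum_(u < i) MM m u (i + k).
Definition fstate r (m : {ffun 'I_r.+2 * 'I_r.+2 -> nat}) i : seq int :=
  trim (mkseq (fun k => Posz (SS m i k)) r.+2).
Definition FF r (m : {ffun 'I_r.+2 * 'I_r.+2 -> nat}) : seq (seq int) :=
  mkseq (fstate m) r.+1.
Definition cstep r (m : {ffun 'I_r.+2 * 'I_r.+2 -> nat}) i : seq nat :=
  mkseq (fun k => MM m i (i.+1 + k)) r.+2.

Lemma SS_out r m i k : r.+2 <= i + k -> @SS r m i k = 0.
Proof.
move=> h; rewrite /SS big1 ?addn0; last by move=> u _; rewrite MM_out.
rewrite /src; case: (i + k) h => [|[|]] //.
Qed.

Lemma nth_fstate r m i k : nth (0:int) (@fstate r m i) k = Posz (SS m i k).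
Proof.
rewrite /fstate nth_trim; case: (ltnP k r.+2) => hk.
  by rewrite nth_mkseq.
rewrite nth_default ?size_mkseq // SS_out //; apply: leq_trans hk _; exact: leq_addl.
Qed.

Lemma SS_step r m i k : @SS r m i.+1 k = SS m i k.+1 + MM m i (i.+1 + k).
Proof. by rewrite /SS big_ord_recr /= addnS addSn addnA. Qed.

Lemma SS0 r m k : @SS r m 0 k = src k.
Proof. by rewrite /SS big_ord0 addn0. Qed.

Lemma ind_trunc r m k : suppL m -> k <= r.+2 ->
  \sum_(u < r.+2) @MM r m u k = \sum_(u < k) MM m u k.
Proof. by move=> hs hk; rewrite (@sum_trunc (fun u => MM m u k) k r.+2) // => u hu; apply: MM_le. Qed.

Lemma Kcons_nat r m (hr : 2 <= r) : Kmultiset (@mu14 r) m ->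
  [/\ forall k, k < r -> \sum_(j < r.+2) MM m k j = \sum_(u < r.+2) MM m u k + src k,
      \sum_(u < r.+2) MM m u r = 1 &
      \sum_(u < r.+2) MM m u r.+1 = 1].
Proof.
move=> hK; have hs : suppL m by case: hK.
have hc := K_cons hK.
split.
- move=> k hk; have := hc (inord k); rewrite outdE indE inordK; last by lia.
  rewrite /mu14 inordK; last by lia.
  rewrite /src; lia.
- have := hc (inord r); rewrite outdE indE inordK // big1.
    by rewrite /mu14 inordK //; lia.
  move=> j _; case: (ltnP r j) => hj; last exact: MM_le.
  have -> : nat_of_ord j = r.+1 by have := ltn_ord j; lia.
  exact: MM_rr.
- have := hc (inord r.+1); rewrite outdE indE inordK // big1.
    by rewrite /mu14 inordK //; lia.
  move=> j _; apply: MM_le => //; have := ltn_ord j; lia.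
Qed.

Lemma nth11 k : nth (0:int) [:: Posz 1; Posz 1] k = Posz (src k).
Proof. by case: k => [|[|k]] //=; rewrite nth_nil. Qed.

Lemma state11 : js_state [:: Posz 1; Posz 1].
Proof. by []. Qed.

Lemma fstate11 r m i : (forall k, @SS r m i k = src k) -> fstate m i = [:: Posz 1; Posz 1].
Proof.
move=> h; apply: state_eq; [exact: state_trim | exact: state11 |].
by move=> k; rewrite nth_fstate nth11 h.
Qed.

Lemma nth_cstep r m i k : nth 0 (@cstep r m i) k = MM m i (i.+1 + k).
Proof.
case: (ltnP k r.+2) => hk; first by rewrite nth_mkseq.
rewrite nth_default ?size_mkseq // MM_out //; apply: leq_trans hk _; exact: leq_addl.
Qed.

Lemma F_js r (hr : 2 <= r) m : Kmultiset (@mu14 r) m ->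
  js_seq [:: Posz 1; Posz 1] [:: Posz 1; Posz 1] r (FF m).
Proof.
move=> hK; have hs : suppL m by case: hK.
have [c1 c2 c3] := Kcons_nat hr hK.
split.
- by rewrite size_mkseq.
- by apply/allP => s; rewrite /FF /mkseq => /mapP [i _ ->]; exact: state_trim.
- rewrite nth_mkseq //; apply: fstate11 => k; exact: SS0.
- rewrite nth_mkseq //; apply: fstate11 => -[|[|k]].
  + rewrite /SS addn0 -(@ind_trunc r m r hs) ?c2 /src; lia.
  + rewrite (@ind_trunc r m r.+1 hs) // big_ord_recr /= MM_rr // addn0 in c3.
    rewrite /SS addn1 c3 /src; lia.
  + rewrite SS_out; last by rewrite !addnS !ltnS leq_addr.
    by rewrite /src.
- move=> i hi; rewrite !nth_mkseq ?ltnS //; last exact: ltnW.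
  exists (cstep m i); split.
  + rewrite nth_fstate sumn_mkseq -outd_shift // c1 // (@ind_trunc r m i) //; last by lia.
    by rewrite /SS addn0 addnC.
  + by move=> k; rewrite !nth_fstate nth_cstep SS_step PoszD.
Qed.

Definition TT (ss : seq (seq int)) i k : int := nth (0:int) (nth [::] ss i) k.
Definition GG r (ss : seq (seq int)) : {ffun 'I_r.+2 * 'I_r.+2 -> nat} :=
  [ffun p => if inLambda p then
     absz (TT ss (nat_of_ord p.1).+1 (p.2 - (nat_of_ord p.1).+1) - TT ss p.1 (p.2 - p.1))%R
   else 0].

Lemma GF r (hr : 2 <= r) m : Kmultiset (@mu14 r) m -> GG r (FF m) = m.
Proof.
move=> hK; apply/ffunP => -[i j]; rewrite ffunE /=.
case: ifP => hp; last by rewrite hK.1 ?hp.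
have [ij ir] : i < j /\ i < r.
  move: hp; rewrite /inLambda /posroot /= => /andP [h1 h2].
  have := ltn_ord j; have := ltn_ord i; move: h2; lia.
rewrite /TT !nth_mkseq ?ltnS //; last by apply: ltnW.
rewrite !nth_fstate SS_step subnSK // subnKC // PoszD.
rewrite (_ : forall a b : int, (a + b - a = b)%R); last by move=> a b; rewrite addrC addKr.
by rewrite /= MM_ord.
Qed.


Notation a11 := [:: Posz 1; Posz 1].

Section J.
Lemma J0 r ss : js_seq a11 a11 r ss -> forall k, TT ss 0 k = Posz (src k).
Proof. by case=> _ _ h0 _ _ k; rewrite /TT h0 nth11. Qed.

Lemma Jr r ss : js_seq a11 a11 r ss -> forall k, TT ss r k = Posz (src k).
Proof. by case=> _ _ _ h0 _ k; rewrite /TT h0 nth11. Qed.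

Lemma Jstep r ss : js_seq a11 a11 r ss -> forall i, i < r ->
  exists c : seq nat, Posz (sumn c) = TT ss i 0 /\
    forall k, TT ss i.+1 k = (TT ss i k.+1 + Posz (nth 0 c k))%R.
Proof. by case=> _ _ _ _ h i hi; apply: h. Qed.

Lemma Jnn r ss : js_seq a11 a11 r ss -> forall i k, i <= r -> (0 <= TT ss i k)%R.
Proof.
move=> hJ; elim=> [|i IH] k hi; first by rewrite (J0 hJ).
have [c [_ hc]] := Jstep hJ hi.
by rewrite hc; apply: addr_ge0; [apply: IH; exact: ltnW|].
Qed.

Lemma Jcc r ss : js_seq a11 a11 r ss -> forall i k, i < r ->
  (0 <= TT ss i.+1 k - TT ss i k.+1)%R.
Proof.
move=> hJ i k hi; have [c [_ hc]] := Jstep hJ hi.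
by rewrite hc addrC addKr.
Qed.

Lemma Jpers r ss : js_seq a11 a11 r ss -> forall d i k, i + d <= r ->
  (TT ss i (k + d) <= TT ss (i + d) k)%R.
Proof.
move=> hJ; elim=> [|d IH] i k hd; first by rewrite !addn0.
rewrite addnS -addSn; apply: le_trans (IH i k.+1 _) _; first by lia.
have hid : i + d < r by lia.
have := Jcc hJ k hid; rewrite addnS; lra.
Qed.

Lemma Jvan r ss : js_seq a11 a11 r ss -> forall i k, i <= r -> r.+2 <= i + k ->
  TT ss i k = 0%R.
Proof.
move=> hJ i k hi hk; apply/eqP; rewrite eq_le (Jnn hJ) // andbT.
have := Jpers hJ (k - (r - i)) (_ : i + (r - i) <= r); rewrite subnK; last by lia.
rewrite subnKC // (Jr hJ) /src.
have -> : (k - (r - i) == 0) = false by lia.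
have -> : (k - (r - i) == 1) = false by lia.
by apply.
Qed.

Lemma Jccvan r ss : js_seq a11 a11 r ss -> forall i k, i < r -> r.+2 <= i.+1 + k ->
  (TT ss i.+1 k - TT ss i k.+1 = 0)%R.
Proof.
move=> hJ i k hi hk; rewrite !(Jvan hJ) ?subrr //; try lia.
Qed.
End J.

Lemma suppG r ss : suppL (GG r ss).
Proof. by move=> p hp; rewrite ffunE (negbTE hp). Qed.

Lemma MM_G r ss : js_seq a11 a11 r ss -> forall i k, i < r ->
  Posz (MM (GG r ss) i (i.+1 + k)) = (TT ss i.+1 k - TT ss i k.+1)%R.
Proof.
move=> hJ i k hi; case: (ltnP (i.+1 + k) r.+2) => hk; last first.
  by rewrite MM_out // (Jccvan hJ).
rewrite /MM ifT; last by apply/andP; split => //; lia.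
rewrite ffunE /= !inordK //; try lia.
rewrite ifT; last first.
  by rewrite /inLambda /posroot /= !inordK //; lia.
rewrite addKn (_ : i.+1 + k - i = k.+1); last by lia.
have := Jcc hJ k hi; case: (TT ss i.+1 k - TT ss i k.+1)%R => //.
Qed.

Lemma SS_G r ss : js_seq a11 a11 r ss -> forall i k, i <= r ->
  Posz (SS (GG r ss) i k) = TT ss i k.
Proof.
move=> hJ; elim=> [|i IH] k hi; first by rewrite SS0 (J0 hJ).
rewrite SS_step PoszD IH; last exact: ltnW.
rewrite MM_G //; lra.
Qed.

Lemma FG r ss : js_seq a11 a11 r ss -> FF (GG r ss) = ss.
Proof.
move=> hJ; have [hsz hall _ _ _] := hJ.
apply: (@eq_from_nth _ [::]); first by rewrite size_mkseq hsz.
move=> i; rewrite size_mkseq => hi; rewrite nth_mkseq //.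
apply: state_eq; first exact: state_trim.
  by apply: (allP hall); apply: mem_nth; rewrite hsz.
by move=> k; rewrite nth_fstate (SS_G hJ).
Qed.

Lemma GK r (hr : 2 <= r) ss : js_seq a11 a11 r ss -> Kmultiset (@mu14 r) (GG r ss).
Proof.
move=> hJ; set m := GG r ss; have hs : suppL m := @suppG r ss.
split => // k; rewrite sum_coord.
rewrite -/(outd m k) -/(ind m k) outdE indE.
have out0 : forall u, r <= u -> \sum_(j < r.+2) MM m u j = 0.
  move=> u hu; apply: big1 => j _; case: (ltnP u j) => hj; last exact: MM_le.
  case: (ltnP u r.+2) => hu2; last by rewrite MM_le //; move: hu2 (ltn_ord j); lia.
  have [-> ->] : u = r /\ nat_of_ord j = r.+1 by have := ltn_ord j; lia.
  exact: MM_rr.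
case: (ltnP k r) => hk.
- have [c [hc1 hc2]] := Jstep hJ hk.
  have hnth : forall kk, nth 0 c kk = MM m k (k.+1 + kk).
    move=> kk; have := MM_G hJ kk hk; rewrite (hc2 kk) addrC addKr.
    by case.
  rewrite outd_shift //.
  have : sumn c = \sum_(kk < r.+2) MM m k (k.+1 + kk).
    rewrite sumn_nth (eq_bigr (fun kk : 'I_(size c) => MM m k (k.+1 + kk))); last first.
      by move=> kk _; rewrite hnth.
    apply: (@sum_trunc2 (fun kk => MM m k (k.+1 + kk)) (minn (size c) r.+2)).
    + exact: geq_minl.
    + exact: geq_minr.
    + move=> u hu; case: (ltnP u (size c)) => hu2.
        by rewrite MM_out //; move: hu hu2; lia.
      by rewrite -hnth nth_default.
  move=> <-.
  have := SS_G hJ 0 (ltnW hk); rewrite -hc1 /SS addn0 => /eqP; rewrite eqz_nat => /eqP <-.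
  rewrite (@ind_trunc r m k hs); last by have := ltn_ord k; lia.
  rewrite -/m /mu14 /src; lia.
- rewrite out0 //.
  have := SS_G hJ 0 (leqnn r); have := SS_G hJ 1 (leqnn r).
  rewrite !(Jr hJ) /SS addn0 addn1.
  have e2 := @ind_trunc r m r.+1 hs (leqnSn _).
  rewrite [X in _ = X]big_ord_recr /= MM_rr // addn0 in e2.
  have e1 := @ind_trunc r m r hs (leqW (leqnSn _)).
  have : nat_of_ord k = r \/ nat_of_ord k = r.+1 by have := ltn_ord k; lia.
  case=> ek; rewrite ek ?e1 ?e2 /mu14 ek /src -/m.
  all: move=> /eqP h1 /eqP h2; rewrite eqz_nat in h1 h2; move/eqP: h1 => h1; move/eqP: h2 => h2; idtac.
  all: clearbody m; move: h1 h2; set s1 := (\sum_(u < r) MM m u r)%N; set s2 := (\sum_(u < r) MM m u r.+1)%N; move=> h1 h2.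
  all: clearbody s1 s2; clear e1 e2 out0; lia.
Qed.

Theorem mainTheorem14 (r : nat) (hr : (2 <= r)%N) :
  exists N : nat,
    card_of (@Kmultiset r (@mu14 r)) N /\
    card_of (js_seq [:: Posz 1; Posz 1] [:: Posz 1; Posz 1] r) N.
Proof.
have [N hN] := K_card r; exists N; split => //.
apply: (@card_of_transfer _ _ _ _ N (@FF r) (GG r) hN).
- by move=> m; apply: F_js.
- by move=> ss; apply: GK.
- by move=> m; apply: GF.
- by move=> ss; apply: FG.
Qed.
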